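(* Let $\sigma$ be a proper schedule and let $\sigma'$ be the intermediate schedule obtained from $\sigma$ by an admissible swap at step $j^*\in J$ between machines $M_h$ and $M_i$. Writing $C_j=C_j(\sigma)$ and $C'_j=C_j(\sigma')$: (1) $C'_j=C_j$ for all $j\notin J_H\cup J_I$; (2) $C'_j\le C_j$ for all $j\in J_H$; (3) $C'_j\ge C_j$ for all $j\in J_I$.
   Context: Jobs $J=\{1,\dots,n\}$, job $j$ with positive integer processing time $p_j$, are scheduled non-preemptively on $m$ identical machines $M_1,\dots,M_m$; $p_{\max}=\max_j p_j$, $P(X)=\sum_{j\in X}p_j$. A proper schedule $\sigma$ is a partition $J=J_1(\sigma)\cup\dots\cup J_m(\sigma)$, the jobs of $J_i(\sigma)$ processed on $M_i$ consecutively from time $0$ without idle time in increasing index order; $C_j(\sigma)$ is the completion time of $j$. $J_j=\{1,\dots,j\}$, $J_{i,j}(\sigma)=J_i(\sigma)\cap J_j$, $\Delta_{h,i,j}(\sigma)=P(J_{h,j}(\sigma))-P(J_{i,j}(\sigma))$. The swap: admissible for proper $\sigma$ at step $j^*$ with machines $M_h,M_i$ if $j^*\in J_h(\sigma)$, $|J_i(\sigma)\setminus J_{i,j^*}(\sigma)|\ge 2p_{\max}$, and $\Delta_{h,i,j^*}(\sigma)\ge 4p_{\max}^2$. Let $J_I$ be the first (smallest-index) $2p_{\max}$ jobs of $J_i(\sigma)\setminus J_{i,j^*}(\sigma)$ and $J_H$ the last (largest-index) $2p_{\max}$ jobs of $J_{h,j^*}(\sigma)$; choose non-empty $J_{H'}\subseteq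 J_H$, $J_{I'}\subseteq J_I$ with $P(J_{H'})=P(J_{I'})$. The intermediate schedule $\sigma'$ is obtained by modifying only $M_h$ and $M_i$: on $M_h$ the time interval occupied by $J_H$ in $\sigma$ is filled by the jobs of $J_H\setminus J_{H'}$ (in their order in $\sigma$) followed by those of $J_{I'}$ (in their order in $\sigma$); on $M_i$ the interval occupied by $J_I$ is filled by $J_{H'}$ followed by $J_I\setminus J_{I'}$ (each in their order in $\sigma$); all other jobs keep their positions. *)

(* Defs.v *)
From mathcomp Require Import all_boot all_order all_algebra.
Set Implicit Arguments. Unset Strict Implicit. Unset Printing Implicit Defensive.

(* Jobs are the natural numbers 1..n; processing times p : nat -> nat
   (only the values on 1..n matter). A proper schedule
   is an assignment a : nat -> 'I_m of jobs to machines (J_i(sigma) is the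
   set of jobs j in 1..n with a j = i); each machine processes its jobs in
   increasing index order from time 0 without idle time. *)

Definition jobs (n : nat) : seq nat := iota 1 n.

Definition Pset (p : nat -> nat) (s : seq nat) : nat := \sum_(k <- s) p k.

Definition pmax (p : nat -> nat) (n : nat) : nat := \max_(j <- jobs n) p j.

Definition machine_jobs m n (a : nat -> 'I_m) (i : 'I_m) : seq nat :=
  [seq j <- jobs n | a j == i].

Definition machine_jobs_upto m n (a : nat -> 'I_m) (i : 'I_m) (j : nat) : seq nat :=
  [seq k <- machine_jobs n a i | k <= j].

Definition machine_jobs_after m n (a : nat -> 'I_m) (i : 'I_m) (j : nat) : seq nat :=
  [seq k <- machine_jobs n a i | j < k].

Definition C_proper m (p : nat -> nat) n (a : nat -> 'I_m) (j : nat) : nat :=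
  Pset p (machine_jobs_upto n a (a j) j).

Definition Delta m (p : nat -> nat) n (a : nat -> 'I_m) (h i : 'I_m) (j : nat) : int :=
  ((Pset p (machine_jobs_upto n a h j))%:Z - (Pset p (machine_jobs_upto n a i j))%:Z)%R.

Definition admissible m (p : nat -> nat) n (a : nat -> 'I_m) (jstar : nat) (h i : 'I_m) : Prop :=
  [/\ 1 <= jstar <= n, a jstar = h,
      2 * pmax p n <= size (machine_jobs_after n a i jstar)
    & ((4 * pmax p n ^ 2)%:Z <= Delta p n a h i jstar)%R].

Definition J_I m (p : nat -> nat) n (a : nat -> 'I_m) (jstar : nat) (i : 'I_m) : seq nat :=
  take (2 * pmax p n) (machine_jobs_after n a i jstar).

Definition J_H m (p : nat -> nat) n (a : nat -> 'I_m) (jstar : nat) (h : 'I_m) : seq nat :=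
  let L := machine_jobs_upto n a h jstar in drop (size L - 2 * pmax p n) L.

(* J_{H'} = J_H ∩ HH and J_{I'} = J_I ∩ II are the chosen subsets:
   nonempty with equal total processing time. *)
Definition swap_choice m (p : nat -> nat) n (a : nat -> 'I_m) (jstar : nat) (h i : 'I_m)
  (HH II : pred nat) : Prop :=
  [/\ has HH (J_H p n a jstar h), has II (J_I p n a jstar i)
    & Pset p (filter HH (J_H p n a jstar h)) = Pset p (filter II (J_I p n a jstar i))].

(* The intermediate schedule sigma': the sequence of jobs processed
   (consecutively from time 0, no idle time) on each machine k. *)
Definition inter_seq m (p : nat -> nat) n (a : nat -> 'I_m) (jstar : nat) (h i : 'I_m)
  (HH II : pred nat) (k : 'I_m) : seq nat :=
  let JH := J_H p n a jstar h in
  let JI := J_I p n a jstar i in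
  if k == h then
    let L := machine_jobs_upto n a h jstar in
    take (size L - size JH) L ++ filter (predC HH) JH ++ filter II JI
      ++ machine_jobs_after n a h jstar
  else if k == i then
    machine_jobs_upto n a i jstar ++ filter HH JH ++ filter (predC II) JI
      ++ drop (size JI) (machine_jobs_after n a i jstar)
  else machine_jobs n a k.

Definition inter_machine m (p : nat -> nat) n (a : nat -> 'I_m) (jstar : nat) (h i : 'I_m)
  (HH II : pred nat) (j : nat) : 'I_m :=
  if (j \in J_H p n a jstar h) && HH j then i
  else if (j \in J_I p n a jstar i) && II j then h
  else a j.

Definition seq_completion (p : nat -> nat) (s : seq nat) (j : nat) : nat :=
  Pset p (take (index j s).+1 s).

Definition C_inter m (p : nat -> nat) n (a : nat -> 'I_m) (jstar : nat) (h i : 'I_m)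
  (HH II : pred nat) (j : nat) : nat :=
  seq_completion p (inter_seq p n a jstar h i HH II (inter_machine p n a jstar h i HH II j)) j.

(* Main.v *)
Require Import Defs.
From mathcomp Require Import all_boot all_order all_algebra.
From mathcomp Require Import zify.

Definition pre (j : nat) (s : seq nat) := take (index j s).+1 s.

Lemma Pset_nil p : Pset p [::] = 0. Proof. by rewrite /Pset big_nil. Qed.
Lemma Pset_cons p x s : Pset p (x :: s) = p x + Pset p s. Proof. by rewrite /Pset big_cons. Qed.
Lemma Pset_cat p s1 s2 : Pset p (s1 ++ s2) = Pset p s1 + Pset p s2.
Proof. by rewrite /Pset big_cat. Qed.

Lemma Pset_split p (P : pred nat) s :
  Pset p (filter P s) + Pset p (filter (predC P) s) = Pset p s.
Proof.
elim: s => [|x s IH] /=; first by rewrite !Pset_nil.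
case: (P x) => /=; rewrite !Pset_cons; lia.
Qed.

Lemma Pset_filter_le p (P : pred nat) s : Pset p (filter P s) <= Pset p s.
Proof. rewrite -(Pset_split p P s); lia. Qed.

Lemma Pset_take_le p k s : Pset p (take k s) <= Pset p s.
Proof. rewrite -{2}(cat_take_drop k s) Pset_cat; lia. Qed.

Lemma Pset_bound p s M : (forall x, x \in s -> p x <= M) -> Pset p s <= size s * M.
Proof.
elim: s => [|x s IH] H /=; first by rewrite Pset_nil.
rewrite Pset_cons mulSn.
have h1 := H x (mem_head x s).
have h2 : Pset p s <= size s * M by apply: IH => y hy; apply: H; rewrite in_cons hy orbT.
exact: leq_add.
Qed.

Lemma pre_cat_l (s1 s2 : seq nat) j : j \in s1 -> pre j (s1 ++ s2) = pre j s1.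
Proof.
move=> js; have hi : index j s1 < size s1 by rewrite index_mem.
rewrite /pre index_cat js take_cat; case: ltnP => // hle.
have -> : (index j s1).+1 - size s1 = 0 by apply/eqP; rewrite subn_eq0.
by rewrite take0 cats0 take_oversize.
Qed.

Lemma pre_cat_r (s1 s2 : seq nat) j : j \notin s1 -> pre j (s1 ++ s2) = s1 ++ pre j s2.
Proof.
move=> js; rewrite /pre index_cat (negbTE js) take_cat; case: ltnP => hle.
  by move: hle; rewrite ltnNge -addnS leq_addr.
by rewrite -addnS addKn.
Qed.

Lemma index_cons_ne (x j : nat) l : x != j -> index j (x :: l) = (index j l).+1.
Proof. by move=> ne; rewrite /index /= (negbTE ne). Qed.

Lemma pre_filter (P : pred nat) s j : P j -> pre j (filter P s) = filter P (pre j s).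
Proof.
move=> Pj; elim: s => [|x s IH] //=.
case: (eqVneq x j) => [->|ne].
  rewrite /pre /=; case: ifP => [_|h]; last by rewrite h in Pj.
  by rewrite index_head /= !take0.
case: ifP => Px.
  rewrite /pre (index_cons_ne _ _ _ ne) /=. congr (_ :: _). exact: IH.
exact: IH.
Qed.

Lemma Pset_pre_filter_le p (P : pred nat) s j :
  Pset p (filter P (pre j s)) <= Pset p (filter P s).
Proof.
rewrite /pre; set k := (index j s).+1.
have -> : Pset p (filter P s) = Pset p (filter P (take k s)) + Pset p (filter P (drop k s)).
  by rewrite -Pset_cat -filter_cat cat_take_drop.
exact: leq_addr.
Qed.

Lemma iota_split x n : x <= n -> iota 1 n = iota 1 x ++ iota x.+1 (n - x).
Proof. by move=> h; rewrite -{1}(subnKC h) iotaD add1n. Qed.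

Lemma filter_le_iota x n : x <= n -> [seq k <- iota 1 n | k <= x] = iota 1 x.
Proof.
move=> h; rewrite (iota_split _ _ h) filter_cat.
have -> : [seq k <- iota x.+1 (n - x) | k <= x] = [::].
  rewrite -(filter_pred0 (iota x.+1 (n - x))); apply: eq_in_filter => y.
  rewrite mem_iota /= => hy; lia.
rewrite cats0; apply/all_filterP; apply/allP => y; rewrite mem_iota => hy; lia.
Qed.

Lemma filter_gt_iota x n : x <= n -> [seq k <- iota 1 n | x < k] = iota x.+1 (n - x).
Proof.
move=> h; rewrite (iota_split _ _ h) filter_cat.
have -> : [seq k <- iota 1 x | x < k] = [::].
  rewrite -(filter_pred0 (iota 1 x)); apply: eq_in_filter => y.
  rewrite mem_iota /= => hy; lia.
rewrite cat0s; apply/all_filterP; apply/allP => y; rewrite mem_iota => hy; lia.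
Qed.

Lemma filter_comm (P Q : pred nat) s : filter P (filter Q s) = filter Q (filter P s).
Proof. by rewrite -!filter_predI; apply: eq_filter => y /=; rewrite andbC. Qed.

Lemma mj_split m n (a : nat -> 'I_m) k js : js <= n ->
  machine_jobs n a k = machine_jobs_upto n a k js ++ machine_jobs_after n a k js.
Proof.
move=> h; rewrite /machine_jobs_upto /machine_jobs_after /machine_jobs /jobs.
rewrite [X in X ++ _]filter_comm [X in _ ++ X]filter_comm filter_le_iota //.
by rewrite filter_gt_iota // -filter_cat -iota_split.
Qed.

Lemma pre_iota j n : 1 <= j <= n -> pre j (iota 1 n) = iota 1 j.
Proof.
case/andP=> h1 h2; rewrite (iota_split _ _ h2) pre_cat_l; last by rewrite mem_iota; lia.
have hj : j.-1 <= j by lia.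
rewrite (iota_split _ _ hj) pre_cat_r; last by rewrite mem_iota; lia.
have -> : j - j.-1 = 1 by lia.
have -> : j.-1.+1 = j by lia.
by rewrite /pre /= /index /=.
Qed.

Lemma C_proper_pre m p n (a : nat -> 'I_m) j : 1 <= j <= n ->
  C_proper p n a j = Pset p (pre j (machine_jobs n a (a j))).
Proof.
move=> hj; rewrite /C_proper /machine_jobs_upto /machine_jobs /jobs pre_filter ?eqxx //.
rewrite filter_comm pre_iota //; congr (Pset p (filter _ _)).
by case/andP: hj => _ hj; rewrite filter_le_iota.
Qed.

Lemma uniq_cat_notin (s1 s2 : seq nat) x : uniq (s1 ++ s2) -> x \in s2 -> x \notin s1.
Proof. by rewrite cat_uniq => /and3P [_ /hasPn H _] /H. Qed.

Lemma mem_upto m n (a : nat -> 'I_m) k js x :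
  (x \in machine_jobs_upto n a k js) = [&& x <= js, a x == k & x \in jobs n].
Proof. by rewrite !mem_filter. Qed.

Lemma mem_after m n (a : nat -> 'I_m) k js x :
  (x \in machine_jobs_after n a k js) = [&& js < x, a x == k & x \in jobs n].
Proof. by rewrite !mem_filter. Qed.

Lemma mem_mj m n (a : nat -> 'I_m) k x :
  (x \in machine_jobs n a k) = (a x == k) && (x \in jobs n).
Proof. by rewrite !mem_filter. Qed.

Lemma uniq_mj m n (a : nat -> 'I_m) k : uniq (machine_jobs n a k).
Proof. by rewrite filter_uniq // iota_uniq. Qed.

Lemma sc_pre p s j : seq_completion p s j = Pset p (pre j s).
Proof. by []. Qed.

Lemma ar1 A B C E F G L q : B <= F -> F <= G -> L = C + G -> A + 4*q <= L -> G <= 2*q -> A + B <= C + E.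
Proof. lia. Qed.
Lemma ar2 A B C E G L q X : B <= X -> X <= 2*q -> L = C + G -> A + 4*q <= L -> G <= 2*q -> A + B <= C + E.
Proof. lia. Qed.
Lemma ar3 A B X Y Z W : X + Y = B -> X <= W -> Z = W -> A + B <= A + (Z + Y).
Proof. lia. Qed.

Lemma ar4 t x fH fHc fI J : fH + fHc = J -> fH = fI -> t + (fHc + (fI + x)) = t + (J + x).
Proof. lia. Qed.
Lemma ar5 t x fI fIc fH J : fI + fIc = J -> fH = fI -> t + (fH + (fIc + x)) = t + (J + x).
Proof. lia. Qed.

Theorem lemma4 (m n : nat) (p : nat -> nat) (a : nat -> 'I_m)
  (jstar : nat) (h i : 'I_m) (HH II : pred nat) :
  (forall j, 1 <= j <= n -> 0 < p j) ->
  admissible p n a jstar h i ->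
  swap_choice p n a jstar h i HH II ->
  [/\ (forall j, 1 <= j <= n -> j \notin J_H p n a jstar h -> j \notin J_I p n a jstar i ->
         C_inter p n a jstar h i HH II j = C_proper p n a j),
      (forall j, j \in J_H p n a jstar h ->
         C_inter p n a jstar h i HH II j <= C_proper p n a j)
    & (forall j, j \in J_I p n a jstar i ->
         C_proper p n a j <= C_inter p n a jstar h i HH II j)].
Proof.
move=> ppos [/andP[js1 js2] ajs hsz hD] [hasH hasI hPeq].
have hD' : Pset p (machine_jobs_upto n a i jstar) + 4 * pmax p n ^ 2
           <= Pset p (machine_jobs_upto n a h jstar).
  by move: hD; rewrite /Delta; lia.
set pm := pmax p n in hsz hD' hPeq hasH hasI *.
have hpm : forall x, x \in jobs n -> p x <= pm.
  by move=> x hx; rewrite /pm /pmax; apply: (leq_bigmax_seq (P := xpredT)).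
set Lh := machine_jobs_upto n a h jstar in hD' *.
set Li := machine_jobs_upto n a i jstar in hD' *.
set Ah := machine_jobs_after n a h jstar.
set Ai := machine_jobs_after n a i jstar in hsz *.
set T := take (size Lh - 2 * pm) Lh.
set D := drop (2 * pm) Ai.
set JH := J_H p n a jstar h in hasH hPeq *.
set JI := J_I p n a jstar i in hasI hPeq *.
have eJH : JH = drop (size Lh - 2 * pm) Lh by [].
have eJI : JI = take (2 * pm) Ai by [].
have eLh : Lh = T ++ JH by rewrite eJH cat_take_drop.
have eAi : Ai = JI ++ D by rewrite eJI cat_take_drop.
have szJH : size JH <= 2 * pm by rewrite eJH size_drop; lia.
have szJI : size JI = 2 * pm by rewrite eJI size_takel.
have ajsh : 0 < size JH by move: hasH; case: (JH).
have pm0 : 0 < pm by lia.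
have hin : i != h.
  apply/eqP => eih; move: hD'; rewrite /Li /Lh eih; nia.
have hJHb : Pset p JH <= 2 * pm * pm.
  apply: leq_trans (leq_mul szJH (leqnn pm)); apply: Pset_bound => x hx; apply: hpm.
  by move: hx; rewrite eJH => /mem_drop; rewrite mem_upto => /and3P[].
have hJIb : Pset p JI <= 2 * pm * pm.
  rewrite -szJI; apply: Pset_bound => x hx; apply: hpm.
  by move: hx; rewrite eJI => /mem_take; rewrite mem_after => /and3P[].
have hq : 4 * pm ^ 2 = 4 * (pm * pm) by [].
rewrite hq in hD'.
rewrite -mulnA in hJHb hJIb.
move: (pm * pm) hD' hJHb hJIb => q hD' hJHb hJIb.
have emh : machine_jobs n a h = T ++ JH ++ Ah.
  by rewrite (mj_split _ _ _ h jstar js2) -/Lh -/Ah eLh catA.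
have emi : machine_jobs n a i = Li ++ JI ++ D.
  by rewrite (mj_split _ _ _ i jstar js2) -/Li -/Ai eAi.
have einh : inter_seq p n a jstar h i HH II h = T ++ filter (predC HH) JH ++ filter II JI ++ Ah.
  rewrite /inter_seq eqxx -/JH -/JI -/Lh -/Ah.
  by have -> : size Lh - size JH = size Lh - 2 * pm by rewrite eJH size_drop; lia.
have eini : inter_seq p n a jstar h i HH II i = Li ++ filter HH JH ++ filter (predC II) JI ++ D.
  by rewrite /inter_seq (negbTE hin) eqxx -/JH -/JI -/Li -/Ai szJI.
have einx : forall k, k != h -> k != i -> inter_seq p n a jstar h i HH II k = machine_jobs n a k.
  by move=> k k1 k2; rewrite /inter_seq (negbTE k1) (negbTE k2).
have uh : uniq (T ++ JH ++ Ah) by rewrite -emh uniq_mj.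
have ui : uniq (Li ++ JI ++ D) by rewrite -emi uniq_mj.
have memJH : forall x, x \in JH -> [&& x <= jstar, a x == h & x \in jobs n].
  by move=> x; rewrite eJH => /mem_drop; rewrite mem_upto.
have memJI : forall x, x \in JI -> [&& jstar < x, a x == i & x \in jobs n].
  by move=> x; rewrite eJI => /mem_take; rewrite mem_after.
have memT : forall x, x \in T -> [&& x <= jstar, a x == h & x \in jobs n].
  by move=> x /mem_take; rewrite mem_upto.
have memD : forall x, x \in D -> [&& jstar < x, a x == i & x \in jobs n].
  by move=> x /mem_drop; rewrite mem_after.
have jobsE : forall x, (x \in jobs n) = (1 <= x <= n).
  by move=> x; rewrite mem_iota; lia.
split.
- move=> j hj nH nI.
  have eim : inter_machine p n a jstar h i HH II j = a j.
    by rewrite /inter_machine -/JH -/JI (negbTE nH) (negbTE nI).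
  rewrite /C_inter eim (C_proper_pre _ _ _ _ _ hj) sc_pre.
  have hjm : j \in machine_jobs n a (a j) by rewrite mem_mj eqxx jobsE.
  case: (eqVneq (a j) h) => ajh.
    rewrite ajh einh emh; rewrite ajh emh in hjm.
    case jT: (j \in T).
      by rewrite !pre_cat_l.
    have jA : j \in Ah by move: hjm; rewrite !mem_cat jT (negbTE nH).
    have n1 : j \notin filter (predC HH) JH by rewrite mem_filter (negbTE nH) andbF.
    have n2 : j \notin filter II JI by rewrite mem_filter (negbTE nI) andbF.
    rewrite (pre_cat_r _ _ _ (negbT jT)) (pre_cat_r _ _ _ n1) (pre_cat_r _ _ _ n2).
    rewrite (pre_cat_r _ _ _ (negbT jT)) (pre_cat_r _ _ _ nH).
    rewrite !Pset_cat; exact: (@ar4 _ _ _ _ _ _ (Pset_split p HH JH) hPeq).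
  case: (eqVneq (a j) i) => aji; last by rewrite einx.
  rewrite aji eini emi; rewrite aji emi in hjm.
  case jL: (j \in Li).
    by rewrite !pre_cat_l.
  have n1 : j \notin filter HH JH by rewrite mem_filter (negbTE nH) andbF.
  have n2 : j \notin filter (predC II) JI by rewrite mem_filter (negbTE nI) andbF.
  rewrite (pre_cat_r _ _ _ (negbT jL)) (pre_cat_r _ _ _ n1) (pre_cat_r _ _ _ n2).
  rewrite (pre_cat_r _ _ _ (negbT jL)) (pre_cat_r _ _ _ nI).
  rewrite !Pset_cat; exact: (@ar5 _ _ _ _ _ _ (Pset_split p II JI) hPeq).
- move=> j jH.
  have /and3P[jle /eqP ajh jjob] := memJH j jH.
  have hj : 1 <= j <= n by rewrite -jobsE.
  have jnT : j \notin T by apply: (uniq_cat_notin T JH) => //; rewrite -eLh /Lh /machine_jobs_upto filter_uniq // uniq_mj.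
  have jnI : j \notin JI by apply/negP => /memJI /and3P[_ /eqP]; rewrite ajh => /eqP; rewrite eq_sym (negbTE hin).
  rewrite (C_proper_pre _ _ _ _ _ hj) ajh emh (pre_cat_r _ _ _ jnT) (pre_cat_l _ _ _ jH).
  rewrite /C_inter sc_pre.
  case Hj: (HH j).
    have -> : inter_machine p n a jstar h i HH II j = i by rewrite /inter_machine -/JH jH Hj.
    have jnL : j \notin Li by rewrite mem_upto ajh eq_sym (negbTE hin) andbF.
    have jf : j \in filter HH JH by rewrite mem_filter Hj jH.
    rewrite eini (pre_cat_r _ _ _ jnL) (pre_cat_l _ _ _ jf) !Pset_cat.
    have e1 : Pset p Lh = Pset p T + Pset p JH by rewrite eLh Pset_cat.
    have e2 := Pset_take_le p (index j (filter HH JH)).+1 (filter HH JH).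
    have e3 := Pset_filter_le p HH JH.
    rewrite /pre in e2 *; exact: (@ar1 _ _ _ _ _ _ _ _ e2 e3 e1 hD' hJHb).
  have -> : inter_machine p n a jstar h i HH II j = h by rewrite /inter_machine -/JH -/JI jH Hj (negbTE jnI).
  have jf : j \in filter (predC HH) JH by rewrite mem_filter /= Hj jH.
  rewrite einh (pre_cat_r _ _ _ jnT) (pre_cat_l _ _ _ jf) pre_filter ?Pset_cat /= ?Hj //.
  by rewrite leq_add2l Pset_filter_le.
- move=> j jI.
  have /and3P[jlt /eqP aji jjob] := memJI j jI.
  have hj : 1 <= j <= n by rewrite -jobsE.
  have jnH : j \notin JH by apply/negP => /memJH /and3P[_ /eqP]; rewrite aji => /eqP; rewrite (negbTE hin).
  have jnL : j \notin Li by rewrite mem_upto; apply/negP => /andP[hh _]; lia.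
  have jnT : j \notin T by apply/negP => /memT /and3P[hh _]; lia.
  rewrite (C_proper_pre _ _ _ _ _ hj) aji emi (pre_cat_r _ _ _ jnL) (pre_cat_l _ _ _ jI).
  rewrite /C_inter sc_pre.
  case Ij: (II j).
    have -> : inter_machine p n a jstar h i HH II j = h by rewrite /inter_machine -/JH -/JI (negbTE jnH) jI Ij.
    have n1 : j \notin filter (predC HH) JH by rewrite mem_filter (negbTE jnH) andbF.
    have jf : j \in filter II JI by rewrite mem_filter Ij jI.
    rewrite einh (pre_cat_r _ _ _ jnT) (pre_cat_r _ _ _ n1) (pre_cat_l _ _ _ jf) !Pset_cat.
    have e1 : Pset p Lh = Pset p T + Pset p JH by rewrite eLh Pset_cat.
    have e2 := Pset_take_le p (index j JI).+1 JI.
    rewrite /pre in e2 *; exact: (@ar2 _ _ _ _ _ _ _ _ e2 hJIb e1 hD' hJHb).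
  have -> : inter_machine p n a jstar h i HH II j = i by rewrite /inter_machine -/JH -/JI (negbTE jnH) jI Ij /= aji.
  have n1 : j \notin filter HH JH by rewrite mem_filter (negbTE jnH) andbF.
  have jf : j \in filter (predC II) JI by rewrite mem_filter /= Ij jI.
  rewrite eini (pre_cat_r _ _ _ jnL) (pre_cat_r _ _ _ n1) (pre_cat_l _ _ _ jf) pre_filter ?Pset_cat /= ?Ij //.
  have e1 := Pset_split p II (pre j JI).
  have e2 := Pset_pre_filter_le p II JI j.
  exact: (@ar3 _ _ _ _ _ _ e1 e2 hPeq).
Qed.
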